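(* Take the special vertex $v=0$. Let $I,J$ be $m$-subsets of $\{1,\dots,n\}$ such that $J\setminus I=J'\sqcup J''$ with $J'<(I\setminus J)<J''$. Then $\kappa(M_I,M_J)=|J'|$ and $\kappa(M_J,M_I)=|J''|$.
   Context: Fix integers $1\le m<n$. Let $Q$ be the quiver with vertex set $\mathbb{Z}_n$ and arrows $x_a\colon a-1\to a$, $y_a\colon a\to a-1$ for $a\in\{1,\dots,n\}$. Let $A$ be the quotient of $\widehat{\mathbb{C}Q}$ by the relations $xy=yx$ and $x^m=y^{n-m}$ at every vertex; centre $Z=\mathbb{C}[[t]]$, $t=xy$; $e_j$ the idempotent at vertex $j$. $\operatorname{CM}(A)$ is the category of finitely generated $A$-modules free over $Z$. For an $m$-subset $I\subseteq\{1,\dots,n\}$, $M_I\in\operatorname{CM}(A)$ is the module with $e_jM_I=Z$ for all $j$, where $x_a$ acts by $1$ if $a\in I$ and by $t$ if $a\notin I$, and $y_a$ acts by $t$ if $a\in I$ and by $1$ if $a\notin I$. For $M,N\in\operatorname{CM}(A)$, $K_v(M,N)$ is the cokernel of the injective restriction map $\operatorname{Hom}_A(M,N)\to\operatorname{Hom}_Z(e_vM,e_vN)$ and $\kappa(M,N)=\dim_{\mathbb{C}}K_v(M,N)$. For sets $X,Y$ of integers, $X<Y$ means $x<y$ for all $x\in X,y\in Y$. *)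

(* Defs.v *)
From HB Require Import structures.
From mathcomp Require Import all_boot all_order all_algebra.
Set Implicit Arguments. Unset Strict Implicit. Unset Printing Implicit Defensive.
Import GRing.Theory.
Local Open Scope ring_scope.

(* Z = F[[t]] modelled as coefficient sequences; power series ring structure
   is only needed through multiplication by 1 or t (the arrow actions). *)
Definition series (F : fieldType) := nat -> F.

Definition tmul (F : fieldType) (s : series F) : series F :=
  fun k => if k is k'.+1 then s k' else 0.

Definition act (F : fieldType) (b : bool) (s : series F) : series F :=
  if b then s else tmul s.

(* Arrows are labelled a = 1..n, using a : 'I_n.+1 with 0 < a.
   x_a : (a-1) -> (a mod n), y_a : (a mod n) -> (a-1).
   On M_I: x_a acts by 1 if a \in I else t; y_a acts by t if a \in I else 1.
   A family g (g j \in Z = Hom_Z(e_j M_I, e_j M_J), identified with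
   multiplication by g j) is an A-module hom M_I -> M_J iff it commutes
   with all arrows (checking on the generator 1 of each e_j M_I). *)
Definition is_hom (F : fieldType) (n : nat) (I J : {set 'I_n.+1})
  (g : nat -> series F) : Prop :=
  forall a : 'I_n.+1, (0 < a)%N ->
    act (a \in I) (g (a %% n)%N) = act (a \in J) (g a.-1)
 /\ act (a \notin I) (g a.-1) = act (a \notin J) (g (a %% n)%N).

(* image of the restriction map Hom_A(M_I,M_J) -> Hom_Z(e_v M_I, e_v M_J) = Z *)
Definition hom_image (F : fieldType) (n : nat) (I J : {set 'I_n.+1}) (v : nat)
  : series F -> Prop :=
  fun s => exists g, is_hom I J g /\ g v = s.

Definition lincomb (F : fieldType) (k : nat) (c : 'I_k -> F)
  (b : 'I_k -> series F) : series F :=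
  fun e => \sum_(i < k) c i * b i e.

Definition ssub (F : fieldType) (s u : series F) : series F := fun e => s e - u e.

(* dim_F (Z / V) = k : there are k elements whose classes form a basis of Z/V *)
Definition codim_eq (F : fieldType) (V : series F -> Prop) (k : nat) : Prop :=
  exists b : 'I_k -> series F,
    (forall s, exists c : 'I_k -> F, V (ssub s (lincomb c b)))
 /\ (forall c : 'I_k -> F, V (lincomb c b) -> forall i, c i = 0).

(* kappa(M_I, M_J) = k, with kappa = dim K_v(M_I,M_J) *)
Definition kappa_eq (F : fieldType) (n : nat) (I J : {set 'I_n.+1}) (v k : nat)
  : Prop := codim_eq (hom_image (F:=F) I J v) k.

Definition set_lt (n : nat) (X Y : {set 'I_n.+1}) : Prop :=
  forall x y, x \in X -> y \in Y -> (x < y)%N.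

Definition msubset (n m : nat) (I : {set 'I_n.+1}) : Prop :=
  I \subset [set i : 'I_n.+1 | (0 < i)%N] /\ #|I| = m.

(* Main.v *)
Require Import Defs.
From HB Require Import structures.
From mathcomp Require Import all_boot all_order all_algebra.
From mathcomp Require Import zify.
From Stdlib Require Import FunctionalExtensionality.
Set Implicit Arguments. Unset Strict Implicit. Unset Printing Implicit Defensive.
Import GRing.Theory.

Definition tpow (F : fieldType) k (s : series F) := iter k (@tmul F) s.

Lemma tpowE (F : fieldType) k (s : series F) e :
  tpow k s e = if e < k then 0%R else s (e - k).
Proof.
elim: k e => [|k IH] e; first by rewrite /tpow /= subn0.
rewrite /tpow iterS -/(tpow k s) /tmul; case: e => [|e] //.
Qed.

Lemma tpowS (F : fieldType) k (s : series F) : tpow k.+1 s = tmul (tpow k s).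
Proof. by []. Qed.

Lemma tpow_tmul (F : fieldType) k (s : series F) : tpow k (tmul s) = tmul (tpow k s).
Proof. by rewrite /tpow -iterSr. Qed.

Definition cnt n (A : {set 'I_n.+1}) (a : nat) := #|[set x in A | (x <= a)%N]|.

Definition pos n (A : {set 'I_n.+1}) := forall x : 'I_n.+1, x \in A -> 0 < x.

Lemma cnt0 n (A : {set 'I_n.+1}) : pos A -> cnt A 0 = 0.
Proof.
move=> hp; rewrite /cnt (_ : [set x in A | x <= 0] = set0) ?cards0 //.
apply/setP => x; rewrite !inE; apply/negbTE; apply/negP => /andP[/hp h1 h2]; lia.
Qed.

Lemma cntn n (A : {set 'I_n.+1}) : cnt A n = #|A|.
Proof.
rewrite /cnt (_ : [set x in A | x <= n] = A) //.
apply/setP => x; rewrite !inE -ltnS ltn_ord andbT //.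
Qed.

Lemma cnt_le n (A : {set 'I_n.+1}) a : cnt A a <= #|A|.
Proof.
apply: subset_leq_card; apply/subsetP => x; rewrite inE => /andP[] //.
Qed.

Lemma cnt_step n (A : {set 'I_n.+1}) (a : nat) : 0 < a -> a <= n ->
  cnt A a = cnt A a.-1 + ((inord a : 'I_n.+1) \in A).
Proof.
move=> ha han; have hlt : a < n.+1 by lia.
set o : 'I_n.+1 := inord a.
have ho : (o : nat) = a by rewrite inordK.
rewrite /cnt; case hA: (o \in A).
  have -> : [set x in A | x <= a] = o |: [set x in A | x <= a.-1].
    apply/setP => x; rewrite !inE; case: (eqVneq x o) => [->|hne].
      by rewrite hA ho leqnn.
    have hv : (x : nat) <> a by rewrite -ho => /val_inj; apply/eqP.
    rewrite /=; case: (x \in A) => //=; apply/idP/idP => h; lia.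
  rewrite cardsU1 inE ho.
  have -> : (a <= a.-1) = false by apply/negbTE; lia.
  by rewrite andbF /= addnC.
have -> : [set x in A | x <= a] = [set x in A | x <= a.-1].
  apply/setP => x; rewrite !inE; case hx: (x \in A) => //=.
  have hv : (x : nat) <> a by move=> hxa; rewrite -ho in hxa; move/val_inj: hxa => hxa; rewrite hxa hA in hx.
  apply/idP/idP => h; lia.
by rewrite addn0.
Qed.

Lemma hom_rel (F : fieldType) n (X Y : {set 'I_n.+1}) (g : nat -> series F) :
  pos X -> pos Y -> is_hom X Y g -> forall a, a < n ->
  tpow (cnt (Y :\: X) a) (g a) = tpow (cnt (X :\: Y) a) (g 0).
Proof.
move=> pX pY hg; elim=> [_|a IH ha].
  by rewrite !cnt0 // => x; rewrite inE => /andP[_ h]; first [exact: pX h | exact: pY h].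
have hlt : a.+1 < n.+1 by lia.
set o : 'I_n.+1 := inord a.+1.
have ho : (o : nat) = a.+1 by rewrite inordK.
have hpo : 0 < o by rewrite ho.
have [h1 h2] := hg o hpo.
rewrite ho modn_small // /= in h1 h2.
have s1 := @cnt_step n (X :\: Y) a.+1 isT (ltnW ha).
have s2 := @cnt_step n (Y :\: X) a.+1 isT (ltnW ha).
rewrite -/o !inE /= in s1 s2.
rewrite s1 s2; have IH' := IH (ltnW ha).
rewrite /act in h1 h2.
case hx: (o \in X); case hy: (o \in Y); rewrite hx hy /= in h1 h2 *.
- by rewrite !addn0 h1.
- by rewrite addn0 addn1 h1 tpow_tmul IH'.
- by rewrite addn0 addn1 tpowS -tpow_tmul h1.
- by rewrite !addn0 -h2.
Qed.

Lemma hom_build (F : fieldType) n (X Y : {set 'I_n.+1}) (k : nat) (s : series F) :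
  pos X -> pos Y -> #|X :\: Y| = #|Y :\: X| ->
  (forall a, a <= n -> cnt (Y :\: X) a <= k + cnt (X :\: Y) a) ->
  (forall e, e < k -> s e = 0%R) -> exists g, is_hom X Y g /\ g 0 = s.
Proof.
move=> pX pY hc hb hs.
have p1 : pos (X :\: Y) by move=> x; rewrite inE => /andP[_ h]; exact: pX.
have p2 : pos (Y :\: X) by move=> x; rewrite inE => /andP[_ h]; exact: pY.
pose u : series F := fun e => s (e + k).
pose E a := k + cnt (X :\: Y) a - cnt (Y :\: X) a.
exists (fun a => tpow (E a) u); split; last first.
  rewrite /E !cnt0 // addn0 subn0; apply: functional_extensionality => e.
  rewrite tpowE; case: ltnP => h; first by rewrite hs.
  by rewrite /u subnK.
move=> o ho; have hon : (o : nat) <= n by rewrite -ltnS.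
have hEm : E (o %% n) = E o.
  case: (ltnP o n) => h; first by rewrite modn_small.
  have hon' : (o : nat) = n by lia.
  rewrite hon' modnn /E !cnt0 // !cntn hc; lia.
rewrite hEm.
have s1 := @cnt_step n (X :\: Y) o ho hon.
have s2 := @cnt_step n (Y :\: X) o ho hon.
rewrite inord_val !inE in s1 s2.
have hb1 := hb o hon.
have hb0 := hb o.-1 (leq_trans (leq_pred _) hon).
rewrite /E /act; case hx: (o \in X); case hy: (o \in Y); rewrite hx hy /= in s1 s2 *.
all: split; rewrite -?tpowS; congr (tpow _ _).
all: try lia.
Qed.

Lemma image_zero (F : fieldType) n (X Y : {set 'I_n.+1}) (k : nat) (s : series F) :
  pos X -> pos Y ->
  (exists a, a < n /\ k + cnt (X :\: Y) a <= cnt (Y :\: X) a) ->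
  hom_image X Y 0 s -> forall e, e < k -> s e = 0%R.
Proof.
move=> pX pY [a [ha hk]] [g [hg <-]] e he.
have := hom_rel pX pY hg ha.
move/(congr1 (fun f => f (e + cnt (X :\: Y) a))); rewrite !tpowE.
have h1 : (e + cnt (X :\: Y) a < cnt (Y :\: X) a) = true by apply/idP; lia.
have h2 : (e + cnt (X :\: Y) a < cnt (X :\: Y) a) = false.
  by apply/negbTE; rewrite -leqNgt leq_addl.
by rewrite h1 h2 addnK.
Qed.

Lemma lincomb_at (F : fieldType) k (c : 'I_k -> F) e (he : e < k) :
  lincomb c (fun i : 'I_k => fun e => if e == val i then 1%R else 0%R) e = c (Ordinal he).
Proof.
rewrite /lincomb (bigD1 (Ordinal he)) //= eqxx GRing.mulr1 big1 ?GRing.addr0 // => i hi.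
have -> : (e == val i) = false.
  apply/negbTE; apply/negP => /eqP hei; move/eqP: hi; apply; apply: val_inj => /=; by rewrite hei.
by rewrite GRing.mulr0.
Qed.

Lemma codim_zeros (F : fieldType) (V : series F -> Prop) k :
  (forall s, V s <-> forall e, e < k -> s e = 0%R) -> codim_eq V k.
Proof.
move=> hV.
exists (fun i : 'I_k => fun e => if e == val i then 1%R else 0%R); split.
  move=> s; exists (fun i => s (val i)); apply/hV => e he.
  by rewrite /ssub lincomb_at /= GRing.subrr.
move=> c /hV h i; have := h _ (ltn_ord i); rewrite lincomb_at.
by have -> : Ordinal (ltn_ord i) = i by apply: val_inj.
Qed.

Lemma kappa_char (F : fieldType) n (X Y : {set 'I_n.+1}) k :
  pos X -> pos Y -> #|X :\: Y| = #|Y :\: X| ->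
  (exists a, a < n /\ k + cnt (X :\: Y) a <= cnt (Y :\: X) a) ->
  (forall a, a <= n -> cnt (Y :\: X) a <= k + cnt (X :\: Y) a) ->
  kappa_eq F X Y 0 k.
Proof.
move=> pX pY hc he hb; apply: codim_zeros => s; split.
  by move=> hi; exact: (image_zero pX pY he hi).
move=> hs; exact: (hom_build pX pY hc hb hs).
Qed.

Lemma set_min n (A : {set 'I_n.+1}) x0 : x0 \in A ->
  exists2 x, x \in A & forall y, y \in A -> (x : nat) <= y.
Proof.
move=> h; case: (@arg_minnP _ x0 (fun i => i \in A) (fun i : 'I_n.+1 => val i) h).
by move=> x hx hm; exists x.
Qed.

Lemma set_max n (A : {set 'I_n.+1}) x0 : x0 \in A ->
  exists2 x, x \in A & forall y, y \in A -> (y : nat) <= x.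
Proof.
move=> h; case: (@arg_maxnP _ x0 (fun i => i \in A) (fun i : 'I_n.+1 => val i) h).
by move=> x hx hm; exists x.
Qed.

Theorem lemma6p4 (F : fieldType) (n m : nat) (I J J' J'' : {set 'I_n.+1}) :
  (1 <= m)%N -> (m < n)%N ->
  msubset m I -> msubset m J ->
  J :\: I = J' :|: J'' -> [disjoint J' & J''] ->
  set_lt J' (I :\: J) -> set_lt (I :\: J) J'' ->
  kappa_eq F I J 0 #|J'| /\ kappa_eq F J I 0 #|J''|.
Proof.
move=> hm hmn [sI cI] [sJ cJ] hsplit hdis hlt1 hlt2.
have pI : pos I by move=> x /(subsetP sI); rewrite inE.
have pJ : pos J by move=> x /(subsetP sJ); rewrite inE.
have pD1 : pos (I :\: J) by move=> x; rewrite inE => /andP[_ h]; exact: pI.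
have pD2 : pos (J :\: I) by move=> x; rewrite inE => /andP[_ h]; exact: pJ.
have hc : #|I :\: J| = #|J :\: I| by rewrite !cardsD setIC cI cJ.
have hJ' : J' \subset J :\: I by rewrite hsplit subsetUl.
have hJ'' : J'' \subset J :\: I by rewrite hsplit subsetUr.
have hD2 : #|J :\: I| = #|J'| + #|J''|.
  by rewrite hsplit cardsU (disjoint_setI0 hdis) cards0 subn0.
have hD2or : forall z, z \in J :\: I -> (z \in J') || (z \in J'').
  by move=> z; rewrite hsplit inE.
split.
- apply: kappa_char => //.
  + case: (boolP (J' == set0)) => [/eqP e0 | ne].
      exists 0; split; first lia.
      by rewrite e0 cards0 !cnt0.
    case/set0Pn: ne => y hy.
    have : 0 < #|I :\: J| by rewrite hc; apply/card_gt0P; exists y; exact: (subsetP hJ').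
    case/card_gt0P => x0 hx0.
    case: (set_min hx0) => x1 hx1 hmin.
    have x1p := pD1 _ hx1.
    have x1n : (x1 : nat) <= n by rewrite -ltnS.
    exists x1.-1; split; first lia.
    have -> : cnt (I :\: J) x1.-1 = 0.
      rewrite /cnt (_ : [set x in I :\: J | x <= x1.-1] = set0) ?cards0 //.
      apply/setP => z; rewrite inE [in RHS]inE.
      apply/negbTE/negP => /andP[hz hza]; have := hmin _ hz; lia.
    rewrite addn0; apply: subset_leq_card; apply/subsetP => z hz.
    rewrite inE (subsetP hJ' _ hz) /=; have := hlt1 _ _ hz hx1; lia.
  + move=> a ha.
    case: (boolP [exists y, (y \in J'') && ((y : nat) <= a)]).
      case/existsP => y /andP[hy hya].
      have -> : cnt (I :\: J) a = #|I :\: J|.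
        rewrite /cnt (_ : [set x in I :\: J | x <= a] = I :\: J) //.
        apply/setP => z; rewrite [in LHS]inE; case hz: (z \in I :\: J) => //=.
        have := hlt2 _ _ hz hy; lia.
      have := cnt_le (J :\: I) a; lia.
    move=> hno.
    have : cnt (J :\: I) a <= #|J'|.
      apply: subset_leq_card; apply/subsetP => z; rewrite inE => /andP[hz hza].
      case/orP: (hD2or _ hz) => // hz''.
      case/negP: hno; apply/existsP; exists z; by rewrite hz'' hza.
    lia.
- apply: kappa_char => //.
  + case: (boolP (J'' == set0)) => [/eqP e0 | ne].
      exists 0; split; first lia.
      by rewrite e0 cards0 !cnt0.
    case/set0Pn: ne => y hy.
    have : 0 < #|I :\: J| by rewrite hc; apply/card_gt0P; exists y; exact: (subsetP hJ'').
    case/card_gt0P => x0 hx0.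
    case: (set_max hx0) => x1 hx1 hmax.
    have yn : (y : nat) <= n by rewrite -ltnS.
    have hxy := hlt2 _ _ hx1 hy.
    exists x1; split; first lia.
    have -> : cnt (I :\: J) x1 = #|I :\: J|.
      rewrite /cnt (_ : [set x in I :\: J | x <= x1] = I :\: J) //.
      apply/setP => z; rewrite [in LHS]inE; case hz: (z \in I :\: J) => //=.
      exact: hmax.
    have : cnt (J :\: I) x1 <= #|J'|.
      apply: subset_leq_card; apply/subsetP => z; rewrite inE => /andP[hz hza].
      case/orP: (hD2or _ hz) => // hz''.
      have := hlt2 _ _ hx1 hz''; lia.
    lia.
  + move=> a ha.
    case: (boolP [exists x, (x \in I :\: J) && ((x : nat) <= a)]).
      case/existsP => x /andP[hx hxa].
      have : #|J'| <= cnt (J :\: I) a.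
        apply: subset_leq_card; apply/subsetP => z hz.
        rewrite inE (subsetP hJ' _ hz) /=; have := hlt1 _ _ hz hx; lia.
      have := cnt_le (I :\: J) a; lia.
    move=> hno.
    have -> : cnt (I :\: J) a = 0.
      rewrite /cnt (_ : [set x in I :\: J | x <= a] = set0) ?cards0 //.
      apply/setP => z; rewrite inE [in RHS]inE.
      apply/negbTE/negP => /andP[hz hza]; case/negP: hno; apply/existsP; exists z.
      by rewrite hz hza.
    lia.
Qed.
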